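(* Let $f:[0,1]\to\mathbb{R}$ with $f(0),f(1)\in\mathbb{Z}$, let $n\in\mathbb{N}_+$, $n\ge 2$, and let $\Phi_n:[0,1]\to\mathbb{R}$ satisfy \[ \Phi_n\left(\tfrac{2}{n}\right)-2\Phi_n\left(\tfrac{1}{n}\right)+\Phi_n(0)\ge\binom{n}{2}^{-1}, \] \[ \Phi_n\left(\tfrac{k+2}{n}\right)-2\Phi_n\left(\tfrac{k+1}{n}\right)+\Phi_n\left(\tfrac{k}{n}\right)\ge\binom{n}{k}^{-1}+\binom{n}{k+2}^{-1},\quad k=1,\dots,n-3 \ (\text{when } n\ge 4), \] \[ \Phi_n(1)-2\Phi_n\left(\tfrac{n-1}{n}\right)+\Phi_n\left(\tfrac{n-2}{n}\right)\ge\binom{n}{n-2}^{-1}. \] If $f(x)-\Phi_n(x)$ is convex on $[0,1]$, then $\widetilde{B}_n(f)$ is convex on $[0,1]$.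
   Context: For $n\in\mathbb{N}_+$ and $f:[0,1]\to\mathbb{R}$, $\widetilde{B}_n(f)(x):=\sum_{k=0}^n \left[f\left(\frac{k}{n}\right)\binom{n}{k}\right]x^k(1-x)^{n-k}$, where $[\alpha]$ is the largest integer $\le\alpha$. *)

(* Defs.v *)
From HB Require Import structures.
From mathcomp Require Import all_boot all_order all_algebra.
From mathcomp Require Import reals.
Set Implicit Arguments. Unset Strict Implicit. Unset Printing Implicit Defensive.
Import Order.TTheory GRing.Theory Num.Theory.
Local Open Scope ring_scope.

(* Modified Bernstein operator:
   Bt_n(f)(x) = sum_{k=0}^n [f(k/n) * C(n,k)] x^k (1-x)^(n-k),
   [a] = largest integer <= a (Num.floor). *)
Definition Btilde (R : realType) (n : nat) (f : R -> R) (x : R) : R :=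
  \sum_(k < n.+1)
    (Num.floor (f (k%:R / n%:R) * ('C(n, k))%:R))%:~R
      * x ^+ k * (1 - x) ^+ (n - k).

Definition convex_on01 (R : realType) (g : R -> R) : Prop :=
  forall x y t : R, 0 <= x <= 1 -> 0 <= y <= 1 -> 0 <= t <= 1 ->
    g (t * x + (1 - t) * y) <= t * g x + (1 - t) * g y.

(* Main.v *)
Require Import Defs.
From HB Require Import structures.
From mathcomp Require Import all_boot all_order all_algebra.
From mathcomp Require Import reals.
From mathcomp Require Import ring lra zify.
Import Order.TTheory GRing.Theory Num.Theory.
Local Open Scope ring_scope.

Section Bern.
Variable R : comNzRingType.

Definition bern (m k : nat) : {poly R} := ('C(m,k))%:R *: ('X^k * (1 - 'X)^+(m-k)).

Lemma bern_deriv0 m : (bern m.+1 0)^`() = - (m.+1%:R *: bern m 0).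
Proof.
rewrite /bern !bin0 !scale1r !mul1r !subn0 deriv_exp derivB derivC derivX sub0r /=.
rewrite scaler_nat; ring.
Qed.

Lemma bern_derivS m k : (bern m.+1 k.+1)^`() = m.+1%:R *: (bern m k - bern m k.+1).
Proof.
rewrite /bern derivZ derivM derivXn deriv_exp derivB derivC derivX sub0r subSS subnS /=.
have e1 : (m.+1 * 'C(m,k) = k.+1 * 'C(m.+1,k.+1))%N by rewrite -mul_bin_diag.
have e2 : (m.+1 * 'C(m,k.+1) = (m - k) * 'C(m.+1,k.+1))%N by rewrite -(mul_bin_down m.+1 k.+1).
set j := (m - k)%N in e2 *.
rewrite -!mul_polyC !rmorph_nat.
transitivity ((('X^k * (1 - 'X) ^+ j) *+ (m.+1 * 'C(m,k)) - ('X^(k.+1) * (1 - 'X) ^+ j.-1) *+ (m.+1 * 'C(m,k.+1)))%R : {poly R}); last first.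
  rewrite !mulrnA; ring.
rewrite e1 e2 !mulrnA; ring.
Qed.

Lemma bern_small m k : (m < k)%N -> bern m k = 0.
Proof. by move=> mk; rewrite /bern bin_small // scale0r. Qed.

Lemma bern_sum_deriv m (c : nat -> R) :
  (\sum_(k < m.+2) c k *: bern m.+1 k)^`() =
  m.+1%:R *: \sum_(k < m.+1) (c k.+1 - c k) *: bern m k.
Proof.
rewrite raddf_sum big_ord_recl /= derivZ bern_deriv0.
under eq_bigr => i _ do rewrite derivZ /bump /= bern_derivS.
have Hs : \sum_(k < m.+1) c k.+1 *: bern m k.+1 =
          \sum_(k < m.+1) c k *: bern m k - c 0%N *: bern m 0.
  pose F := (fun k : 'I_m.+2 => c k *: bern m k).
  have E1 : \sum_(k < m.+2) F k = F ord0 + \sum_(i < m.+1) F (lift ord0 i) by rewrite big_ord_recl.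
  have E2 : \sum_(k < m.+2) F k = \sum_(i < m.+1) F (widen_ord (leqnSn _) i) + F ord_max by rewrite big_ord_recr.
  rewrite /F /= bern_small // scaler0 addr0 in E2.
  rewrite /F /= in E1.
  rewrite E2 in E1; rewrite E1 addrC addKr.
  by apply: eq_bigr => i _; rewrite /bump /= add1n.
transitivity (m.+1%:R *: (\sum_(k < m.+1) c k.+1 *: bern m k - \sum_(k < m.+1) c k.+1 *: bern m k.+1 - c 0%N *: bern m 0)).
  under eq_bigr => i _ do rewrite scalerA mulrC -scalerA scalerBr add1n.
  rewrite -scaler_sumr sumrB scalerN scalerA mulrC -scalerA.
  rewrite -!mul_polyC; ring.
rewrite Hs; congr (_ *: _).
under [RHS]eq_bigr => i _ do rewrite scalerBl.
rewrite sumrB; ring.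
Qed.
End Bern.

From mathcomp Require Import unstable interval_inference boolp classical_sets topology normedtype derive realfun convex.
Import Order.TTheory GRing.Theory Num.Theory.
Import numFieldNormedType.Exports.
Local Open Scope ring_scope.
Local Open Scope convex_scope.

Lemma D1horner (R : realType) (P : {poly R}) (w : R) :
  'D_1 (horner P) w = P^`().[w].
Proof. rewrite -derive1E. exact: esym (congr1 (fun g => g w) (derivE P)). Qed.

Lemma D1hornerF (R : realType) (P : {poly R}) :
  'D_1 (horner P) = horner P^`().
Proof. by apply/funext => w; rewrite D1horner. Qed.

Lemma D1hornerFo (R : realType) (P : {poly R}) :
  'D_1 (horner P : R -> R^o) = (horner P^`() : R -> R^o).
Proof. by apply/funext => w; rewrite D1horner. Qed.

Lemma poly_convex01 (R : realType) (P : {poly R}) :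
  (forall x : R, 0 < x < 1 -> 0 <= (P^`()^`()).[x]) ->
  convex_on01 (horner P).
Proof.
move=> H x y t /andP[x0 x1] /andP[y0 y1] /andP[t0 t1].
pose tt := Itv01 t0 t1.
have key : forall a b : R, 0 <= a -> b <= 1 -> a <= b -> forall s : {i01 R},
   P.[(a : R^o) <| s |> b] <= (P.[a] : R^o) <| s |> P.[b].
  move=> a b a0 b1 ab s.
  apply: (@second_derivative_convex R (horner P) a b) => //.
  + move=> z /andP[az zb].
    rewrite D1hornerF D1horner; apply: H.
    by rewrite (le_lt_trans a0 az) (lt_le_trans zb b1).
  + exact/cvg_at_left_filter/continuous_horner.
  + exact/cvg_at_right_filter/continuous_horner.
  + move=> z _; rewrite D1hornerFo; exact (@derivable_horner R P^`() z).
have [xy|/ltW yx] := leP x y.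
  have := key x y x0 y1 xy tt.
  by rewrite !convRE /= /onem.
have := key y x y0 x1 yx (Itv01 (eqbRL (subr_ge0 _ _) t1) (eqbRL (lerBlDr _ _ _) (eqbRL (lerDl _ _) t0))).
rewrite !convRE /= /onem.
have -> : 1 - (1 - t) = t by rewrite subKr.
by rewrite addrC [X in _ <= X]addrC.
Qed.

Theorem proposition3p1 (R : realType) (f Phi : R -> R) (n : nat) :
  f 0 \is a Num.int -> f 1 \is a Num.int ->
  (2 <= n)%N ->
  Phi (2%:R / n%:R) - 2 * Phi (1 / n%:R) + Phi 0 >= ('C(n, 2))%:R^-1 ->
  (forall k : nat, (1 <= k)%N -> (k <= n - 3)%N ->
     Phi (k.+2%:R / n%:R) - 2 * Phi (k.+1%:R / n%:R) + Phi (k%:R / n%:R)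
       >= ('C(n, k))%:R^-1 + ('C(n, k.+2))%:R^-1) ->
  Phi 1 - 2 * Phi ((n - 1)%:R / n%:R) + Phi ((n - 2)%:R / n%:R)
    >= ('C(n, n - 2))%:R^-1 ->
  convex_on01 (fun x => f x - Phi x) ->
  convex_on01 (Btilde n f).
Proof.
move=> f0 f1 n2 H0 Hmid Hend Hconv.
have [m Em] : exists m, n = m.+2 by case: n n2 {H0 Hmid Hend} => [|[|m]] // _; exists m.
subst n.
rewrite !subSS !subn0 in Hend.
have Hmid' : forall k, (0 < k)%N -> (k < m)%N ->
    'C(m.+2, k)%:R^-1 + 'C(m.+2, k.+2)%:R^-1 <=
    Phi (k.+2%:R / m.+2%:R) - 2 * Phi (k.+1%:R / m.+2%:R) + Phi (k%:R / m.+2%:R).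
  move=> k k0 km; apply: Hmid => //; lia.
set N := m.+2.
have N0 : (N%:R : R) != 0 by rewrite pnatr_eq0.
pose a (k : nat) : R := (Num.floor (f (k%:R / N%:R) * ('C(N, k))%:R))%:~R.
pose c (k : nat) : R := a k / ('C(N, k))%:R.
pose e (k : nat) : R := if (k == 0)%N || (k == N) then 0 else ('C(N, k))%:R^-1.
pose P : {poly R} := \sum_(k < N.+1) c k *: bern R N k.
have PE : Btilde N f = horner P.
  apply/funext => x; rewrite /Btilde /P horner_sum; apply: eq_bigr => k _.
  rewrite hornerZ /bern hornerZ hornerM hornerXn horner_exp hornerD hornerN hornerX hornerC.
  have Ck : ('C(N, k)%:R : R) != 0 by rewrite pnatr_eq0 -lt0n bin_gt0 -ltnS.
  by rewrite /c /a; field.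
have Pdd : P^`()^`() = N%:R *: (m.+1%:R *: \sum_(k < m.+1) ((c k.+2 - c k.+1) - (c k.+1 - c k)) *: bern R m k).
  have E1 := bern_sum_deriv _ m.+1 c.
  have E2 := bern_sum_deriv _ m (fun k => c k.+1 - c k).
  by rewrite /P /N E1 derivZ E2.
have Cpos : forall j, (j <= N)%N -> (0 : R) < ('C(N, j))%:R.
  by move=> j jN; rewrite ltr0n bin_gt0.
have cle : forall j, (j <= N)%N -> c j <= f (j%:R / N%:R).
  move=> j jN; rewrite /c /a ler_pdivrMr ?Cpos //; exact: floor_le.
have cge : forall j, (j <= N)%N -> f (j%:R / N%:R) - e j <= c j.
  move=> j jN; rewrite /e /c /a.
  have [->|j0] := eqVneq j 0%N.
    rewrite /= bin0 mul0r mulr1 divr1 floorK // subr0 //.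
  have [->|jN'] := eqVneq j N.
    rewrite orbT binn divff // mulr1 divr1 floorK // subr0 //.
  rewrite /=.
  have h := floorD1_gt (f (j%:R / N%:R) * ('C(N, j))%:R).
  rewrite intrD in h.
  have Cj := Cpos j jN.
  rewrite ler_pdivlMr // mulrBl mulVf ?gt_eqF //.
  move: h; set A := (Num.floor _)%:~R; set y := f _; set C := ('C(N, j))%:R.
  move=> h; lra.
have grid : forall k, (k <= m)%N ->
    f (k.+1%:R / N%:R) - Phi (k.+1%:R / N%:R) <=
    2^-1 * (f (k%:R / N%:R) - Phi (k%:R / N%:R)) + (1 - 2^-1) * (f (k.+2%:R / N%:R) - Phi (k.+2%:R / N%:R)).
  move=> k km.
  have Npos : (0 : R) < N%:R by rewrite ltr0n.
  have bnd : forall j, (j <= N)%N -> 0 <= (j%:R / N%:R : R) <= 1.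
    move=> j jN; rewrite divr_ge0 ?ler0n //= ler_pdivrMr // mul1r ler_nat //.
  have E : 2^-1 * (k%:R / N%:R) + (1 - 2^-1) * (k.+2%:R / N%:R) = (k.+1%:R / N%:R : R).
    rewrite -[k.+2]addn2 -[k.+1]addn1 !natrD; field.
    by rewrite N0.
  rewrite -{1 2}E.
  apply: Hconv; [apply: bnd; lia | apply: bnd; rewrite /N; lia | ].
  rewrite invr_ge0 ler0n /= invf_le1 ?ler1n //; lra.
have hD : forall k, (k <= m)%N ->
    e k + e k.+2 <= Phi (k.+2%:R / N%:R) - 2 * Phi (k.+1%:R / N%:R) + Phi (k%:R / N%:R).
  move=> k km.
  have eN : e N = 0 by rewrite /e eqxx orbT.
  have e0 : e 0%N = 0 by rewrite /e eqxx.
  have eC : forall j, (0 < j)%N -> (j < N)%N -> e j = ('C(N, j))%:R^-1.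
    by move=> j j0 jN; rewrite /e gtn_eqF // ltn_eqF.
  have Cge0 : forall j, (0 : R) <= ('C(N, j))%:R^-1 by move=> j; rewrite invr_ge0 ler0n.
  have [k0|k0] := posnP k.
  { subst k; rewrite e0 add0r mul0r.
    have [m0|m0] := eqVneq m 0%N.
    { have -> : e 2 = 0 by rewrite /N m0 in eN *; exact: eN.
      have := Cge0 2%N; move: H0; rewrite /N; lra. }
    have -> : e 2 = ('C(N, 2))%:R^-1 by apply: eC => //; rewrite /N; lia.
    move: H0; rewrite /N; lra. }
  case: (ltngtP k m) => [km'| |->].
  - have -> : e k = ('C(N, k))%:R^-1 by apply: eC => //; rewrite /N; lia.
    have -> : e k.+2 = ('C(N, k.+2))%:R^-1 by apply: eC => //; rewrite /N; lia.
    exact: Hmid'.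
  - by rewrite ltnNge km.
  - have -> : e m = ('C(N, m))%:R^-1 by apply: eC; rewrite /N; lia.
    rewrite eN.
    by rewrite addr0 divff.
have Hc : forall k, (k <= m)%N -> 0 <= (c k.+2 - c k.+1) - (c k.+1 - c k).
  move=> k km.
  have := cge k.+2; have := cge k; have := cle k.+1 (leq_trans km (leqnSn _)); have := grid k km; have := hD k km.
  rewrite /N => h1 h2 h3 h4 h5.
  have {}h4 := h4 (leq_trans km (leqW (leqnSn _))).
  have {}h5 := h5 km.
  lra.
rewrite PE; apply: poly_convex01 => x /andP[x0 x1].
rewrite Pdd !hornerZ horner_sum; apply: mulr_ge0 => //; apply: mulr_ge0 => //.
apply: sumr_ge0 => k _; rewrite hornerZ; apply: mulr_ge0; first exact: Hc (ltn_ord k).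
rewrite /bern hornerZ hornerM hornerXn horner_exp hornerD hornerN hornerX hornerC.
apply: mulr_ge0 => //; apply: mulr_ge0; apply: exprn_ge0; lra.
Qed.
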